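(* Let $\mathcal{H}=\mathbb{C}^d$ and let $|e\rangle$ be a unit vector orthogonal to $\mathcal{H}$ in $\mathcal{H}\oplus\mathrm{span}\{|e\rangle\}$. For $\epsilon\in[0,1]$ let $\mathcal{E}_\epsilon(\rho)=\epsilon\rho+(1-\epsilon)|e\rangle\langle e|$ be the erasure channel. Then for any $\epsilon_1,\epsilon_2\in[0,1]$, a single-system probe is sufficient for distinguishing $\mathcal{E}_{\epsilon_1}$ and $\mathcal{E}_{\epsilon_2}$: the maximum of the success probability over single-system probes equals its maximum over all probes, including entangled probes with an arbitrary ancilla.
   Context: For two channels chosen with equal priors $1/2$, the single-shot success probability with a single-system probe $\rho$ on $\mathcal{H}$ is $\frac12+\frac14\|\mathcal{N}_1(\rho)-\mathcal{N}_2(\rho)\|_1$, and with a bipartite probe $\rho_{AB}$ on $\mathcal{H}\otimes\mathbb{C}^{d'}$ (any finite $d'$; channel acting on $A$, identity on $B$) it is $\frac12+\frac14\|(\mathcal{N}_1\otimes\mathrm{id})(\rho_{AB})-(\mathcal{N}_2\otimes\mathrm{id})(\rho_{AB})\|_1$; $\|\cdot\|_1$ is the trace norm. *)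

(* Defs.v *)
From mathcomp Require Import all_boot all_order all_algebra.
From mathcomp Require Import complex mxtens.
From mathcomp Require Import reals.

Set Implicit Arguments.
Unset Strict Implicit.
Unset Printing Implicit Defensive.

Import Order.TTheory GRing.Theory Num.Theory.
Local Open Scope ring_scope.
Local Open Scope complex_scope.

Section QInfo.
Variable R : realType.
Local Notation C := (R[i]).

Definition adjmx {m n} (X : 'M[C]_(m, n)) : 'M[C]_(n, m) := (map_mx Num.conj X)^T.

Definition psd {n} (X : 'M[C]_n) : Prop :=
  adjmx X = X /\ forall v : 'rV[C]_n, 0 <= (v *m X *m adjmx v) 0 0.

Definition is_state {n} (rho : 'M[C]_n) : Prop := psd rho /\ \tr rho = 1.

(* trace norm ||X||_1 = Tr sqrt(X^dagger X) = sum of the square roots of the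
   eigenvalues (with multiplicity) of the Hermitian matrix X^dagger X *)
Definition trace_norm {m n} (X : 'M[C]_(m, n)) : C :=
  \sum_(i < n) sqrtC (spectral_diag (adjmx X *m X) 0 i).

(* The erasure channel E_eps : M_d -> M_(d+1), where C^(d+1) = H (+) span{e}
   and |e> is the last basis vector:
   E_eps(X) = eps X (+) (1-eps) Tr(X) |e><e|  (linear extension of
   rho |-> eps rho + (1-eps)|e><e|). *)
Definition erasure (d : nat) (eps : R) (X : 'M[C]_d) : 'M[C]_(d + 1) :=
  (eps%:C) *: block_mx X 0 0 0
  + ((1 - eps)%:C * \tr X) *: block_mx 0 0 0 (1%:M : 'M[C]_1).

(* (N (x) id_k) applied to an operator X on C^m (x) C^k, where C^m (x) C^k
   is identified with C^(m*k) via mxtens_index (first factor = system A). *)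
Definition apply_A {m n k} (N : 'M[C]_m -> 'M[C]_n) (X : 'M[C]_(m * k))
  : 'M[C]_(n * k) :=
  \matrix_(i, j)
    N (\matrix_(a, a') X (mxtens_index (a, (mxtens_unindex i).2))
                         (mxtens_index (a', (mxtens_unindex j).2)))
      (mxtens_unindex i).1 (mxtens_unindex j).1.

Definition psucc_single {m n} (N1 N2 : 'M[C]_m -> 'M[C]_n) (rho : 'M[C]_m) : C :=
  2^-1 + 4^-1 * trace_norm (N1 rho - N2 rho).

Definition psucc_bip {m n k} (N1 N2 : 'M[C]_m -> 'M[C]_n) (rho : 'M[C]_(m * k)) : C :=
  2^-1 + 4^-1 * trace_norm (apply_A N1 rho - apply_A N2 rho).

End QInfo.

(* Main.v *)
Require Import Defs.
From mathcomp Require Import all_boot all_order all_algebra.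
From mathcomp Require Import complex mxtens.
From mathcomp Require Import reals.
From mathcomp Require Import ring.
Import Order.TTheory GRing.Theory Num.Theory.
Local Open Scope ring_scope.
Local Open Scope complex_scope.

Section S.
Variable R : realType.
Local Notation C := (R[i]).

Lemma adjmxE m n (X : 'M[C]_(m,n)) : adjmx X = (X ^t* )%sesqui.
Proof. by rewrite /adjmx map_trmx. Qed.

Lemma adjmx_mul m n p (A : 'M[C]_(m,n)) (B : 'M[C]_(n,p)) :
  adjmx (A *m B) = adjmx B *m adjmx A.
Proof. by rewrite /adjmx map_mxM trmx_mul. Qed.

Lemma adjmxK m n (A : 'M[C]_(m,n)) : adjmx (adjmx A) = A.
Proof.
by apply/matrixP => i j; rewrite !mxE conjCK.
Qed.

Lemma char_poly_conj n (P D : 'M[C]_n) : P \in unitmx ->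
  char_poly (invmx P *m D *m P) = char_poly D.
Proof.
move=> Pu; rewrite /char_poly /char_poly_mx.
have -> : 'X%:M - map_mx (@polyC C) (invmx P *m D *m P) =
   map_mx (@polyC C) (invmx P) *m ('X%:M - map_mx (@polyC C) D) *m map_mx (@polyC C) P.
  rewrite mulmxBr mulmxBl -!map_mxM mul_mx_scalar -scalemxAl -map_mxM mulVmx //.
  by rewrite map_mx1 scalemx1.
rewrite !det_mulmx mulrC mulrA -det_mulmx -map_mxM mulmxV // map_mx1 det1 mul1r.
done.
Qed.

Lemma sum_eig_eq n (P Q : 'M[C]_n) (s t : 'rV[C]_n) (F : C -> C) :
  P \in unitmx -> Q \in unitmx ->
  invmx P *m diag_mx s *m P = invmx Q *m diag_mx t *m Q ->
  \sum_i F (s 0 i) = \sum_i F (t 0 i).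
Proof.
move=> Pu Qu E.
have := congr1 char_poly E; rewrite !char_poly_conj //.
rewrite !char_poly_trig ?diag_mx_is_trig //.
under eq_bigr do rewrite mxE eqxx mulr1n.
under [in RHS]eq_bigr do rewrite mxE eqxx mulr1n.
rewrite -(big_map (fun i => s 0 i) xpredT (fun x => 'X - x%:P)).
rewrite -(big_map (fun i => t 0 i) xpredT (fun x => 'X - x%:P)).
move=> /prod_XsubC_eq pe.
rewrite -(big_map (fun i => s 0 i) xpredT F).
rewrite -(big_map (fun i => t 0 i) xpredT F).
exact: perm_big.
Qed.


Lemma adj_diag n (y : 'rV[C]_n) : (forall i, y 0 i \is Num.real) ->
  adjmx (diag_mx y) = diag_mx y.
Proof.
move=> yr; apply/matrixP => i j; rewrite !mxE.
case: (eqVneq i j) => [->|ne]; first by rewrite ?eqxx !mulr1n conj_Creal.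
by rewrite ?(negPf ne) !mulr0n conjC0.
Qed.

Lemma tn_eq n (Y V : 'M[C]_n) (y : 'rV[C]_n) : V \is unitarymx ->
  (forall i, y 0 i \is Num.real) -> Y = invmx V *m diag_mx y *m V ->
  trace_norm Y = \sum_i `|y 0 i|.
Proof.
move=> Vu yr EY.
have Vi := unitarymx_unit Vu.
have iV : invmx V = adjmx V by rewrite invmx_unitary // adjmxE.
have hY : adjmx Y = Y.
  by rewrite EY iV !adjmx_mul adjmxK adj_diag // mulmxA.
set A := adjmx Y *m Y.
have EA : A = invmx V *m diag_mx (\row_j (y 0 j * y 0 j)) *m V.
  rewrite /A hY {1}EY -!mulmxA; congr (_ *m _).
  by rewrite EY !mulmxA mulmxK // -mulmx_diag.
have hA : adjmx A = A by rewrite /A adjmx_mul adjmxK.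
have nA : A \is normalmx.
  by apply/normalmxP; rewrite -adjmxE hA.
have /orthomx_spectralP EA2 := nA.
rewrite /trace_norm -/A.
rewrite (@sum_eig_eq _ _ _ _ _ sqrtC (spectral_unit A) Vi (etrans (esym EA2) EA)).
apply: eq_bigr => i _; rewrite mxE -expr2 -real_normK // sqrCK //.
Qed.


Lemma adjmxB m n (A B : 'M[C]_(m,n)) : adjmx (A - B) = adjmx A - adjmx B.
Proof. by apply/matrixP => i j; rewrite !mxE rmorphB. Qed.

Lemma adjmxD m n (A B : 'M[C]_(m,n)) : adjmx (A + B) = adjmx A + adjmx B.
Proof. by apply/matrixP => i j; rewrite !mxE rmorphD. Qed.

Lemma quad_row n (V M : 'M[C]_n) i :
  (V *m M *m adjmx V) i i = (row i V *m M *m adjmx (row i V)) 0 0.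
Proof.
rewrite !mxE; apply: eq_bigr => k _; rewrite !mxE; congr (_ * _).
by apply: eq_bigr => l _; rewrite !mxE.
Qed.

Lemma trace_norm_le n (A B : 'M[C]_n) : psd A -> psd B ->
  trace_norm (A - B) <= \tr A + \tr B.
Proof.
move=> [hA pA] [hB pB].
set Y := A - B.
have hY : adjmx Y = Y by rewrite /Y adjmxB hA hB.
have nY : Y \is normalmx by apply/normalmxP; rewrite -adjmxE hY.
have /orthomx_spectralP EY := nY.
set V := spectralmx Y in EY; set y := spectral_diag Y in EY.
have Vu : V \is unitarymx by exact: spectral_unitarymx.
have Vi := unitarymx_unit Vu.
have iV : invmx V = adjmx V by rewrite invmx_unitary // adjmxE.
have Ed : diag_mx y = V *m Y *m adjmx V.
  by rewrite EY -iV !mulmxA mulmxV // mul1mx mulmxK.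
set q := fun M : 'M[C]_n => fun i => (V *m M *m adjmx V) i i.
have qge0 M : psd M -> forall i, 0 <= q M i.
  by move=> [_ pM] i; rewrite /q quad_row.
have Ey i : y 0 i = q A i - q B i.
  have := congr1 (fun M : 'M[C]_n => M i i) Ed; rewrite /= mxE eqxx mulr1n => ->.
  by rewrite /q /Y mulmxBr mulmxBl !mxE.
have yr i : y 0 i \is Num.real.
  by rewrite Ey rpredB // ger0_real // qge0.
rewrite (@tn_eq _ _ _ _ Vu yr EY).
have trq M : \tr M = \sum_i q M i.
  rewrite /q -/(\tr (V *m M *m adjmx V)) mxtrace_mulC mulmxA -iV mulVmx //.
  by rewrite mul1mx.
rewrite (trq A) (trq B) -big_split /=.
apply: ler_sum => i _; rewrite Ey.
apply: le_trans (ler_normB _ _) _.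
by rewrite !ger0_norm // qge0.
Qed.


Lemma adjmxZ m n (c : C) (A : 'M[C]_(m,n)) : adjmx (c *: A) = c^* *: adjmx A.
Proof. by apply/matrixP => i j; rewrite !mxE rmorphM. Qed.

Lemma adjmx0 m n : adjmx (0 : 'M[C]_(m,n)) = 0.
Proof. by apply/matrixP => i j; rewrite !mxE rmorph0. Qed.

Lemma psd0 n : psd (0 : 'M[C]_n).
Proof. by split; [exact: adjmx0 | move=> v; rewrite mulmx0 mul0mx mxE]. Qed.

Lemma psdD n (A B : 'M[C]_n) : psd A -> psd B -> psd (A + B).
Proof.
move=> [hA pA] [hB pB]; split; first by rewrite adjmxD hA hB.
by move=> v; rewrite mulmxDr mulmxDl mxE addr_ge0.
Qed.

Lemma psd_sum n (I : finType) (F : I -> 'M[C]_n) :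
  (forall i, psd (F i)) -> psd (\sum_i F i).
Proof.
move=> H; apply: (big_ind (fun M => psd M)); [exact: psd0 | exact: psdD | by []].
Qed.

Lemma psdZ n (c : C) (A : 'M[C]_n) : 0 <= c -> psd A -> psd (c *: A).
Proof.
move=> c0 [hA pA]; split; first by rewrite adjmxZ hA conj_Creal // ger0_real.
by move=> v; rewrite -scalemxAr -scalemxAl mxE mulr_ge0.
Qed.

Lemma psd_conj m n (T : 'M[C]_(m,n)) (X : 'M[C]_n) : psd X ->
  psd (T *m X *m adjmx T).
Proof.
move=> [hX pX]; split; first by rewrite !adjmx_mul adjmxK hX mulmxA.
move=> v; have := pX (v *m T).
by rewrite adjmx_mul !mulmxA.
Qed.

Lemma psd_diag n (y : 'rV[C]_n) : (forall i, 0 <= y 0 i) -> psd (diag_mx y).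
Proof.
move=> y0; split; first by rewrite adj_diag // => i; rewrite ger0_real.
move=> v; rewrite mul_mx_diag mxE; apply: sumr_ge0 => j _; rewrite !mxE.
by rewrite mulrAC mulr_ge0 // mul_conjC_ge0.
Qed.

Lemma psd_block m n (X : 'M[C]_m) (Y : 'M[C]_n) : psd X -> psd Y ->
  psd (block_mx X 0 0 Y).
Proof.
move=> [hX pX] [hY pY]; split.
  by rewrite /adjmx map_block_mx !map_mx0 tr_block_mx !trmx0 -/(adjmx X) -/(adjmx Y) hX hY.
move=> v; rewrite -[v]hsubmxK.
have -> : adjmx (row_mx (lsubmx v) (rsubmx v)) = col_mx (adjmx (lsubmx v)) (adjmx (rsubmx v)).
  by rewrite /adjmx map_row_mx tr_row_mx.
rewrite mul_row_block !mulmx0 !addr0 !add0r mul_row_col mxE.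
by rewrite addr_ge0.
Qed.


End S.


Section S.
Variable R : realType.
Local Notation C := (R[i]).
Lemma tn_scaled (c : R) n (P Q : 'M[C]_n) : psd P -> psd Q ->
  trace_norm (c%:C *: (P - Q)) <= `|c%:C| * (\tr P + \tr Q).
Proof.
move=> pP pQ; have [c0|c0] := leP 0 c.
  have c0' : 0 <= c%:C by rewrite ler0c.
  rewrite ger0_norm //.
  rewrite scalerBr mulrDr -!mxtraceZ.
  exact: (@trace_norm_le R _ _ _ (@psdZ R _ _ _ c0' pP) (@psdZ R _ _ _ c0' pQ)).
have c0' : 0 <= (- c)%:C by rewrite ler0c oppr_ge0 ltW.
have -> : c%:C *: (P - Q) = (- c)%:C *: Q - (- c)%:C *: P.
  by rewrite -scalerBr -opprB scalerN -scaleNr rmorphN.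
rewrite ler0_norm; last by rewrite lecR ltW.
rewrite -rmorphN /= [\tr P + _]addrC mulrDr -!mxtraceZ.
exact: (@trace_norm_le R _ _ _ (@psdZ R _ _ _ c0' pQ) (@psdZ R _ _ _ c0' pP)).
Qed.

Lemma erasure_diff d e1 e2 (X : 'M[C]_d) :
  erasure e1 X - erasure e2 X =
  (e1 - e2)%:C *: (block_mx X 0 0 0 - \tr X *: block_mx 0 0 0 (1%:M : 'M[C]_1)).
Proof.
rewrite /erasure !rmorphB /= rmorph1.
set P := block_mx X 0 0 0; set Q := block_mx _ _ _ _; set t := \tr X.
clearbody P Q t.
apply/matrixP => i j; rewrite !mxE.
ring.
Qed.
End S.


Section S.
Variable R : realType.
Local Notation C := (R[i]).

Lemma sum_dl p (l0 : 'I_p) (f : 'I_p -> C) : \sum_l (l == l0)%:R * f l = f l0.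
Proof.
rewrite (bigD1 l0) //= eqxx mul1r big1 ?addr0 // => l /negPf ->.
by rewrite mul0r.
Qed.

Lemma sum_dr p (l0 : 'I_p) (f : 'I_p -> C) : \sum_l f l * ((l == l0)%:R)^* = f l0.
Proof.
rewrite (bigD1 l0) //= eqxx rmorph1 mulr1 big1 ?addr0 // => l /negPf ->.
by rewrite rmorph0 mulr0.
Qed.

Lemma sum_tens m k (F : 'I_(m * k) -> C) :
  \sum_i F i = \sum_a \sum_b F (mxtens_index (a, b)).
Proof.
rewrite pair_big /=.
rewrite (reindex (@mxtens_index m k)) /=; last first.
  by apply: onW_bij; exists (@mxtens_unindex m k); [exact: (@mxtens_indexK m k) | exact: (@mxtens_unindexK m k)].
by apply: eq_bigr => -[a b].
Qed.

Lemma eq_apply_A m n k (N N' : 'M[C]_m -> 'M[C]_n) (X : 'M[C]_(m * k)) :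
  (forall Y, N Y = N' Y) -> apply_A N X = apply_A N' X.
Proof. by move=> H; apply/matrixP => i j; rewrite !mxE H. Qed.

Lemma apply_AB m n k (N N' : 'M[C]_m -> 'M[C]_n) (X : 'M[C]_(m * k)) :
  apply_A N X - apply_A N' X = apply_A (fun Y => N Y - N' Y) X.
Proof. by apply/matrixP => i j; rewrite !mxE. Qed.

Lemma apply_AZ m n k c (N : 'M[C]_m -> 'M[C]_n) (X : 'M[C]_(m * k)) :
  apply_A (fun Y => c *: N Y) X = c *: apply_A N X.
Proof. by apply/matrixP => i j; rewrite !mxE. Qed.

Lemma tr_apply_A m n k (N : 'M[C]_m -> 'M[C]_n) (X : 'M[C]_(m * k)) :
  \tr (apply_A N X) = \sum_b \tr (N (\matrix_(a, a') X (mxtens_index (a, b)) (mxtens_index (a', b)))).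
Proof.
rewrite /mxtrace sum_tens exchange_big; apply: eq_bigr => b _.
by apply: eq_bigr => a _; rewrite mxE mxtens_indexK.
Qed.

Lemma tr_tens m k (X : 'M[C]_(m * k)) :
  \sum_b \tr (\matrix_(a, a') X (mxtens_index (a, b)) (mxtens_index (a', b)) : 'M[C]_m) = \tr X.
Proof.
rewrite [RHS]/mxtrace sum_tens exchange_big; apply: eq_bigr => b _.
by apply: eq_bigr => a _; rewrite mxE.
Qed.

End S.


Section S.
Variable R : realType.
Local Notation C := (R[i]).

Definition Tmx m k : 'M[C]_((m + 1) * k, m * k) :=
  \matrix_(i, l) match split (mxtens_unindex i).1 with
                 | inl a => (l == mxtens_index (a, (mxtens_unindex i).2))%:R
                 | inr _ => 0 end.

Lemma PA_eq m k (X : 'M[C]_(m * k)) :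
  apply_A (fun Y : 'M[C]_m => block_mx Y 0 0 (0 : 'M[C]_1)) X
  = Tmx m k *m X *m adjmx (Tmx m k).
Proof.
apply/matrixP => i j; rewrite !mxE.
under eq_bigr => l _.
  rewrite mxE.
  under eq_bigr => l' _ do rewrite mxE.
  rewrite !mxE.
  over.
case: (split (mxtens_unindex i).1) => [a|u]; rewrite !mxE;
  case: (split (mxtens_unindex j).1) => [a'|u']; rewrite ?mxE.
- by under eq_bigr => l _ do rewrite sum_dl; rewrite sum_dr.
- by rewrite big1 // => l _; rewrite rmorph0 mulr0.
- by rewrite big1 // => l _; rewrite big1 ?mul0r // => l' _; rewrite mul0r.
- by rewrite big1 // => l _; rewrite big1 ?mul0r // => l' _; rewrite mul0r.
Qed.

Definition Tamx m k (a : 'I_m) : 'M[C]_((m + 1) * k, m * k) :=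
  \matrix_(i, l) match split (mxtens_unindex i).1 with
                 | inl _ => 0
                 | inr _ => (l == mxtens_index (a, (mxtens_unindex i).2))%:R end.

Lemma QB_eq m k (X : 'M[C]_(m * k)) :
  apply_A (fun Y : 'M[C]_m => \tr Y *: block_mx 0 0 0 (1%:M : 'M[C]_1)) X
  = \sum_a (Tamx m k a *m X *m adjmx (Tamx m k a)).
Proof.
apply/matrixP => i j; rewrite !mxE summxE.
under [RHS]eq_bigr => a _.
  rewrite mxE.
  under eq_bigr => l _.
    rewrite mxE.
    under eq_bigr => l' _ do rewrite mxE.
    rewrite !mxE.
    over.
  over.
rewrite /mxtrace mulr_suml.
apply: eq_bigr => a _.
case: (split (mxtens_unindex i).1) => [b|u]; rewrite !mxE;
  case: (split (mxtens_unindex j).1) => [b'|u']; rewrite ?mxE.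
- by rewrite mulr0 big1 // => l _; rewrite rmorph0 mulr0.
- by rewrite mulr0 big1 // => l _; rewrite big1 ?mul0r // => l' _; rewrite mul0r.
- by rewrite mulr0 big1 // => l _; rewrite rmorph0 mulr0.
- rewrite (ord1 u) (ord1 u') eqxx mulr1.
  by under eq_bigr => l _ do rewrite sum_dl; rewrite sum_dr.
Qed.

End S.


Lemma trQB (R : realType) m k (rho : 'M[R[i]]_(m * k)) :
 \tr (apply_A (fun Y : 'M[R[i]]_m => (\tr Y *: block_mx 0 0 0 (1%:M:'M[R[i]]_1) : 'M[R[i]]_(m + 1))) rho) = \tr rho.
Proof.
have := @tr_apply_A R _ _ _ (fun Y : 'M[R[i]]_m => (\tr Y *: block_mx 0 0 0 (1%:M:'M[R[i]]_1) : 'M[R[i]]_(m + 1))) rho.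
move=> ->.
rewrite -[RHS]tr_tens.
apply: eq_bigr => b _.
by rewrite mxtraceZ mxtrace_block mxtrace0 add0r mxtrace1 mulr1.
Qed.

Lemma trPA (R : realType) m k (rho : 'M[R[i]]_(m * k)) :
 \tr (apply_A (fun Y : 'M[R[i]]_m => block_mx Y 0 0 (0:'M[R[i]]_1)) rho) = \tr rho.
Proof.
rewrite tr_apply_A -[RHS]tr_tens.
apply: eq_bigr => b _.
by rewrite mxtrace_block mxtrace0 addr0.
Qed.

Lemma bip_bound (R : realType) m k (e1 e2 : R) (rho : 'M[R[i]]_(m * k)) :
  is_state rho ->
  trace_norm (apply_A (erasure e1) rho - apply_A (erasure e2) rho)
    <= `|(e1 - e2)%:C| * (1 + 1).
Proof.
move=> [prho trho].
rewrite apply_AB.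
rewrite (@eq_apply_A R _ _ k _ (fun Y => (e1 - e2)%:C *:
   (block_mx Y 0 0 (0:'M[R[i]]_1) - \tr Y *: block_mx 0 0 0 (1%:M:'M[R[i]]_1))) _
   (fun Y => @erasure_diff R _ e1 e2 Y)).
rewrite apply_AZ.
rewrite -(@apply_AB R _ _ k (fun Y => block_mx Y 0 0 (0:'M[R[i]]_1))
   (fun Y => (\tr Y *: block_mx 0 0 0 (1%:M:'M[R[i]]_1) : 'M[R[i]]_(m + 1)))).
have := @tn_scaled R (e1 - e2) _
  (apply_A (fun Y : 'M[R[i]]_m => block_mx Y 0 0 (0:'M[R[i]]_1)) rho)
  (apply_A (fun Y : 'M[R[i]]_m => (\tr Y *: block_mx 0 0 0 (1%:M:'M[R[i]]_1) : 'M[R[i]]_(m + 1))) rho).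
rewrite trPA trQB trho.
apply.
  rewrite PA_eq; exact: psd_conj.
rewrite QB_eq; apply: psd_sum => a; exact: psd_conj.
Qed.


Theorem theorem10 (R : realType) (d : nat) (eps1 eps2 : R) :
  (0 < d)%N -> 0 <= eps1 <= 1 -> 0 <= eps2 <= 1 ->
  exists rho0 : 'M[R[i]]_d,
    is_state rho0 /\
    (forall rho : 'M[R[i]]_d, is_state rho ->
       psucc_single (erasure eps1) (erasure eps2) rho
       <= psucc_single (erasure eps1) (erasure eps2) rho0) /\
    (forall (d' : nat) (rhoAB : 'M[R[i]]_(d * d')), is_state rhoAB ->
       psucc_bip (erasure eps1) (erasure eps2) rhoAB
       <= psucc_single (erasure eps1) (erasure eps2) rho0).
Proof.
case: d => // d _ _ _.
set e := (delta_mx 0 ord0 : 'rV[R[i]]_d.+1).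
have e0 : forall i, 0 <= e 0 i by move=> i; rewrite mxE ler0n.
have tre : \tr (diag_mx e) = 1.
  rewrite mxtrace_diag (bigD1 ord0) //= mxE !eqxx /= big1 ?addr0 // => i /negPf ne.
  by rewrite mxE ne.
have psd1 : psd (1%:M : 'M[R[i]]_1).
  by rewrite -diag_const_mx; apply: psd_diag => i; rewrite mxE ler01.
have st0 : is_state (diag_mx e) by split => //; exact: psd_diag.
set c := eps1 - eps2.
have bound : forall rho : 'M[R[i]]_(d.+1), is_state rho ->
    trace_norm (erasure eps1 rho - erasure eps2 rho) <= `|c%:C| * (1 + 1).
  move=> rho [prho trho]; rewrite erasure_diff trho scale1r.
  have := @tn_scaled R c _ (block_mx rho 0 0 (0 : 'M[R[i]]_1))
     (block_mx 0 0 0 (1%:M : 'M[R[i]]_1)).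
  rewrite !mxtrace_block !mxtrace0 addr0 add0r mxtrace1 trho.
  apply; first exact: psd_block prho (@psd0 R 1).
  by apply: psd_block => //; exact: psd0.
have val0 : trace_norm (erasure eps1 (diag_mx e) - erasure eps2 (diag_mx e))
    = `|c%:C| * (1 + 1).
  rewrite erasure_diff tre scale1r.
  set y := row_mx ((eps1 - eps2)%:C *: e) (const_mx (- (eps1 - eps2)%:C) : 'rV[R[i]]_1).
  have -> : (eps1 - eps2)%:C *: (block_mx (diag_mx e) 0 0 (0 : 'M[R[i]]_1) - block_mx 0 0 0 1%:M)
      = diag_mx y.
    rewrite diag_mx_row opp_block_mx add_block_mx scale_block_mx.
    congr block_mx; apply/matrixP => a b; rewrite !mxE.
    - by rewrite subr0 -mulrnAr.
    - by rewrite subrr mulr0.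
    - by rewrite subrr mulr0.
    - by rewrite sub0r mulrN mulr_natr mulNrn.
  have cr : (eps1 - eps2)%:C \is Num.real.
    by apply/complex_realP; exists (eps1 - eps2).
  have yr : forall i, y 0 i \is Num.real.
    move=> i; rewrite -(splitK i); case: (split i) => a /=.
      by rewrite row_mxEl mxE rpredM // ger0_real.
    by rewrite row_mxEr mxE rpredN.
  have u1 : (1%:M : 'M[R[i]]_(d.+1 + 1)) \is unitarymx.
    by apply/unitarymxP; rewrite trmx1 map_mx1 mulmx1.
  rewrite (@tn_eq R _ _ 1%:M _ u1 yr); last by rewrite invmx1 mul1mx mulmx1.
  rewrite big_split_ord /= big_ord1 row_mxEr mxE normrN.
  under eq_bigr => i _ do rewrite row_mxEl mxE normrM (ger0_norm (e0 i)).
  by rewrite -mulr_sumr -mxtrace_diag tre mulrDr mulr1.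
have h4 : (0 : R[i]) < 4^-1 by rewrite invr_gt0 ltr0n.
exists (diag_mx e); split => //; split.
  move=> rho st; rewrite /psucc_single val0 lerD2l ler_pM2l //; exact: bound.
move=> k rho st; rewrite /psucc_bip /psucc_single val0 lerD2l ler_pM2l //.
exact: (@bip_bound R _ k eps1 eps2 rho st).
Qed.
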